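(* Let $q\ge 4$. If five distinct points of $\mathcal O_1$ are contained in a solid $\Sigma$ of $\mathrm{PG}(U_1)$, then they lie in a twisted cubic of $\mathcal O_1$ (i.e. in $\theta(L)$ for some $q$-order subline $L$ of $\mathrm{PG}(1,q^3)$), and this twisted cubic equals $\Sigma\cap\mathcal O_1$.
   Context: $q$ is a prime power. Let $U_1\subset\mathbb F_{q^3}^8$ be the set of vectors $(a,b^{q^2},b^{q},c,b,c^{q},c^{q^2},d)$ with $a,d\in\mathbb F_q$, $b,c\in\mathbb F_{q^3}$; it is an $8$-dimensional $\mathbb F_q$-vector space, so $\mathrm{PG}(U_1)\cong\mathrm{PG}(7,q)$. For $(a,b,c,d)\ne 0$ let $P(a,b,c,d)$ be the point of $\mathrm{PG}(U_1)$ spanned by this vector. Let $\mathcal O_1=\{P(1,t,t^{q^2+q},t^{q^2+q+1}) : t\in\mathbb F_{q^3}\}\cup\{P(0,0,0,1)\}$ (a set of $q^3+1$ points; note $P(1,t,t^{q^2+q},t^{q^2+q+1})$ is the vector $(1,t)\otimes(1,t^q)\otimes(1,t^{q^2})$). Let $\theta:\mathrm{PG}(1,q^3)\to\mathcal O_1$ be the bijection $\langle(1,t)\rangle\mapsto P(1,t,t^{q^2+q},t^{q^2+q+1})$, $\langle(0,1)\rangle\mapsto P(0,0,0,1)$. A $q$-order subline of $\mathrm{PG}(1,q^3)$ is the image of $\mathrm{PG}(1,q)=\{\langle(1,t)\rangle:t\in\mathbb F_q\}\cup\{\langle(0,1)\rangle\}$ under an element of $\mathrm{PGL}(2,q^3)$.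 For every $q$-order subline $L$, $\theta(L)$ is a twisted cubic of $\mathrm{PG}(U_1)$ spanning a solid (e.g. $\theta(\mathrm{PG}(1,q))=\{P(1,t,t^2,t^3):t\in\mathbb F_q\}\cup\{P(0,0,0,1)\}$); these are called the twisted cubics of $\mathcal O_1$. A solid is a $3$-dimensional projective subspace. *)

(* Defs.v *)
From HB Require Import structures.
From mathcomp Require Import all_boot all_order all_algebra all_field.
Set Implicit Arguments. Unset Strict Implicit. Unset Printing Implicit Defensive.
Import GRing.Theory.
Local Open Scope ring_scope.

(* F plays the role of F_{q^3} (hypothesis #|F| = q^3 in the theorem);
   the subfield F_q is the set of fixed points of x |-> x^q. *)
Definition Fq (F : finFieldType) (q : nat) (x : F) : bool := x ^+ q == x.

Definition vecU1 (F : finFieldType) (q : nat) (a b c d : F) : 'rV[F]_8 :=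
  \row_(i < 8) nth 0 [:: a; b ^+ (q ^ 2)%N; b ^+ q; c; b; c ^+ q; c ^+ (q ^ 2)%N; d] i.

Definition inU1 (F : finFieldType) (q : nat) (v : 'rV[F]_8) : Prop :=
  exists a b c d : F, Fq q a /\ Fq q d /\ v = vecU1 q a b c d.

Definition Fq_span (F : finFieldType) (q : nat) (u : 'I_4 -> 'rV[F]_8) (v : 'rV[F]_8) : Prop :=
  exists l : 'I_4 -> F, (forall i, Fq q (l i)) /\ v = \sum_(i < 4) l i *: u i.

Definition Fq_indep (F : finFieldType) (q : nat) (u : 'I_4 -> 'rV[F]_8) : Prop :=
  forall l : 'I_4 -> F, (forall i, Fq q (l i)) ->
    \sum_(i < 4) l i *: u i = 0 -> forall i, l i = 0.

(* A solid of PG(U_1) = a 4-dimensional F_q-subspace of U_1, given by a basis u;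
   a point <v> lies in the solid iff Fq_span q u v. *)
Definition is_solid (F : finFieldType) (q : nat) (u : 'I_4 -> 'rV[F]_8) : Prop :=
  (forall i, inU1 q (u i)) /\ Fq_indep q u.

(* PG(1,q^3) is represented by option F: Some t = <(1,t)>, None = <(0,1)>. *)
Definition pg1 (F : finFieldType) (x y : F) : option F :=
  if x == 0 then None else Some (y / x).

Definition pgl_act (F : finFieldType) (M : 'M[F]_2) (p : option F) : option F :=
  match p with
  | Some t => pg1 (M 0 0 + M 0 1 * t) (M 1 0 + M 1 1 * t)
  | None => pg1 (M 0 1) (M 1 1)
  end.

Definition in_subline (F : finFieldType) (q : nat) (M : 'M[F]_2) (p : option F) : Prop :=
  exists s : option F,
    (match s with Some t => Fq q t | None => true end) /\ pgl_act M s = p.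

Definition theta_vec (F : finFieldType) (q : nat) (p : option F) : 'rV[F]_8 :=
  match p with
  | Some t => vecU1 q 1 t (t ^+ (q ^ 2 + q)%N) (t ^+ (q ^ 2 + q + 1)%N)
  | None => vecU1 q 0 0 0 1
  end.

(* Main.v *)
Require Import Defs.
From HB Require Import structures.
From mathcomp Require Import all_boot all_order all_algebra all_field all_fingroup all_solvable.
From mathcomp Require Import ring zify.
From Stdlib Require Import ClassicalEpsilon.
Set Implicit Arguments. Unset Strict Implicit. Unset Printing Implicit Defensive.
Import GRing.Theory.
Local Open Scope ring_scope.

Lemma fchoice (A B : Type) (P : A -> B -> Prop) :
  (forall a, exists b, P a b) -> exists f : A -> B, forall a, P a (f a).
Proof.
move=> h; exists (fun a => proj1_sig (constructive_indefinite_description _ (h a))).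
by move=> a; case: (constructive_indefinite_description _ _).
Qed.

Section Main.
Variables (F : finFieldType) (q : nat).
Hypothesis hq : (2 <= q)%N.
Hypothesis hF : #|F| = (q ^ 3)%N.
Lemma pnat_q : [pchar F].-nat q.
Proof.
have [p pp pc] := finPcharP F.
have ab := fin_ring_pchar_abelem pc.
have pg := abelem_pgroup ab.
rewrite /pgroup cardsT hF pnatX orbF in pg.
by rewrite (eq_pnat _ (pcharf_eq pc)).
Qed.

Definition fr (x : F) := x ^+ q.
Lemma frD x y : fr (x + y) = fr x + fr y.
Proof. by rewrite /fr exprDn_pchar // pnat_q. Qed.
Lemma frM x y : fr (x * y) = fr x * fr y.
Proof. by rewrite /fr exprMn. Qed.
Lemma fr1 : fr 1 = 1. Proof. by rewrite /fr expr1n. Qed.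
Lemma fr0 : fr 0 = 0. Proof. by rewrite /fr expr0n; case: q hq. Qed.
Lemma frN x : fr (- x) = - fr x.
Proof. by apply/eqP; rewrite -subr_eq0 opprK -frD addNr fr0. Qed.
Lemma frB x y : fr (x - y) = fr x - fr y.
Proof. by rewrite frD frN. Qed.
Lemma frV x : fr (x ^-1) = (fr x)^-1.
Proof. by rewrite /fr exprVn. Qed.
Lemma fr3 x : fr (fr (fr x)) = x.
Proof. by rewrite /fr -!exprM -{2}(expf_card x) hF !expnS expn0 muln1 mulnA. Qed.
Lemma fr_eq0 x : (fr x == 0) = (x == 0).
Proof. by rewrite /fr expf_eq0; case: q hq. Qed.
Lemma fr_inj : injective fr.
Proof. by move=> x y h; rewrite -[x]fr3 -[y]fr3 h. Qed.
Local Notation Fq := (@Fq F q).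
Lemma FqP x : reflect (fr x = x) (Fq x).
Proof. exact: eqP. Qed.
Lemma Fq0 : Fq 0. Proof. by apply/FqP; rewrite fr0. Qed.
Lemma Fq1 : Fq 1. Proof. by apply/FqP; rewrite fr1. Qed.
Lemma FqD x y : Fq x -> Fq y -> Fq (x + y).
Proof. by move=> /FqP hx /FqP hy; apply/FqP; rewrite frD hx hy. Qed.
Lemma FqN x : Fq x -> Fq (- x).
Proof. by move=> /FqP hx; apply/FqP; rewrite frN hx. Qed.
Lemma FqB x y : Fq x -> Fq y -> Fq (x - y).
Proof. by move=> hx hy; apply: FqD => //; apply: FqN. Qed.
Lemma FqM x y : Fq x -> Fq y -> Fq (x * y).
Proof. by move=> /FqP hx /FqP hy; apply/FqP; rewrite frM hx hy. Qed.
Lemma FqV x : Fq x -> Fq (x ^-1).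
Proof. by move=> /FqP hx; apply/FqP; rewrite frV hx. Qed.
Lemma Fqf x y : Fq x -> Fq y -> Fq (x / y).
Proof. by move=> hx hy; apply: FqM => //; apply: FqV. Qed.

Definition tr (x : F) := x + fr x + fr (fr x).
Lemma Fq_tr x : Fq (tr x).
Proof. by apply/FqP; rewrite /tr !frD // fr3 //; ring. Qed.
Lemma trD x y : tr (x + y) = tr x + tr y.
Proof. rewrite /tr !frD //; ring. Qed.
Lemma trMFq x c : Fq c -> tr (x * c) = tr x * c.
Proof. by move=> /FqP hc; rewrite /tr !frM hc hc; ring. Qed.
Lemma tr0 : tr 0 = 0.
Proof. by rewrite /tr !fr0 // !addr0. Qed.

Lemma tr_nz : exists b, tr b != 0.
Proof.
pose P : {poly F} := 'X + 'X^q + 'X^(q * q).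
have hP : forall x, P.[x] = tr x.
  by move=> x; rewrite /P !hornerE /tr /fr exprM.
have szP : size P = (q * q).+1.
  rewrite /P addrC size_polyDl size_polyXn // (leq_ltn_trans (size_polyD _ _)) //.
  rewrite !size_polyXn size_polyX gtn_max ltnS.
  have h3 : (q < q * q)%N by nia.
  by rewrite ltnS h3 andbT (leq_trans hq (ltnW h3)).
case: (pickP (fun b => tr b != 0)) => [b hb|h]; first by exists b.
have P0 : P != 0 by rewrite -size_poly_eq0 szP.
have := max_poly_roots P0 (_ : all (root P) (enum F)) (enum_uniq F).
rewrite szP -cardE hF => /(_ _) H.
have : (q ^ 3 < (q * q).+1)%N.
  apply: H; apply/allP => x _; move: (h x); rewrite /root hP /= => /negbFE; apply.
have e3 : (q ^ 3 = q * (q * q))%N by rewrite !expnS expn0 muln1.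
rewrite e3 => hlt; exfalso; nia.
Qed.
Lemma tr_sum n (f : 'I_n -> F) : tr (\sum_i f i) = \sum_i tr (f i).
Proof. exact: (big_morph tr trD tr0). Qed.

Lemma dep5 (u : 'I_4 -> 'rV[F]_8) (w : 'I_5 -> 'rV[F]_8) :
  (forall i, Fq_span q u (w i)) ->
  exists l : 'I_5 -> F, (forall i, Fq (l i)) /\ (exists i, l i != 0) /\
    \sum_(i < 5) l i *: w i = 0.
Proof.
move=> hw; have [c hc] := fchoice hw.
pose C : 'M[F]_(5, 4) := \matrix_(i, j) c i j.
have Kn0 : kermx C != 0.
  rewrite kermx_eq0 /row_free; apply/negP => /eqP h.
  by have := rank_leq_col C; rewrite h.
have [k hk] : exists k, row k (kermx C) != 0.
  case: (pickP (fun k => row k (kermx C) != 0)) => [k hk|h]; first by exists k.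
  case/negP: Kn0; apply/eqP/row_matrixP => k; rewrite row0; apply/eqP.
  by move: (h k) => /= /negbFE.
set l0 := row k (kermx C) in hk.
have l0C : l0 *m C = 0 by apply/eqP; rewrite -sub_kermx row_sub.
clearbody l0.
have [i0 hi0] : exists i, l0 0 i != 0.
  case: (pickP (fun i => l0 0 i != 0)) => [i hi|h]; first by exists i.
  case/negP: hk; apply/eqP/rowP => i.
  by move: (h i) => /= /negbFE /eqP ->; rewrite mxE.
have [b hb] := tr_nz.
pose a := b / l0 0 i0.
exists (fun i => tr (a * l0 0 i)); split; first by move=> i; apply: Fq_tr.
split; first by exists i0; rewrite /a mulfVK.
have -> : \sum_(i < 5) tr (a * l0 0 i) *: w i =
          \sum_(j < 4) (\sum_(i < 5) tr (a * l0 0 i) * c i j) *: u j.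
  under eq_bigr => i _ do rewrite (proj2 (hc i)) scaler_sumr.
  rewrite exchange_big /=; apply: eq_bigr => j _.
  by rewrite scaler_suml; apply: eq_bigr => i _; rewrite scalerA.
apply: big1 => j _.
have -> : \sum_(i < 5) tr (a * l0 0 i) * c i j = tr (a * (l0 *m C) 0 j).
  rewrite mxE mulr_sumr tr_sum; apply: eq_bigr => i _.
  by rewrite mxE mulrA (trMFq (a * l0 0 i)) //; apply: (proj1 (hc i)).
by rewrite l0C mxE mulr0 tr0 scale0r.
Qed.

Definition sel (b : bool) (x y : F) := if b then y else x.
Definition b2o (b : bool) : 'I_2 := if b then 1 else 0.
Definition Tv (x y : F) : 'rV[F]_8 :=
  \row_(i < 8) (sel (odd (i %/ 4)) x y * fr (sel (odd (i %/ 2)) x y) *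
                fr (fr (sel (odd i) x y))).
Definition Kmx (M : 'M[F]_2) : 'M[F]_8 :=
  \matrix_(j < 8, i < 8) (M (b2o (odd (i %/ 4))) (b2o (odd (j %/ 4))) *
     fr (M (b2o (odd (i %/ 2))) (b2o (odd (j %/ 2)))) *
     fr (fr (M (b2o (odd i)) (b2o (odd j))))).

Lemma TvK (M : 'M[F]_2) x y :
  Tv x y *m Kmx M = Tv (M 0 0 * x + M 0 1 * y) (M 1 0 * x + M 1 1 * y).
Proof.
apply/rowP => i; rewrite !mxE.
rewrite !big_ord_recl big_ord0 !mxE /=.
case: i => [[|[|[|[|[|[|[|[|//]]]]]]]] ?];
  rewrite /sel /b2o /= !frD !frM; ring.
Qed.

Definition nrm (z : F) := z * fr z * fr (fr z).
Lemma Fq_nrm z : Fq (nrm z).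
Proof. by apply/FqP; rewrite /nrm !frM fr3; ring. Qed.
Lemma nrm_eq0 z : (nrm z == 0) = (z == 0).
Proof. by rewrite /nrm !mulf_eq0 !fr_eq0 orbb orbb. Qed.
Lemma frfr_eq0 z : (fr (fr z) == 0) = (z == 0).
Proof. by rewrite !fr_eq0. Qed.

Lemma pow_q2 b : b ^+ (q ^ 2)%N = fr (fr b).
Proof. by rewrite /fr -exprM expnS expn1. Qed.
Lemma pow_q21 b : b ^+ (q ^ 2 + q)%N = fr (fr b) * fr b.
Proof. by rewrite exprD pow_q2. Qed.
Lemma pow_q211 b : b ^+ (q ^ 2 + q + 1)%N = fr (fr b) * fr b * b.
Proof. by rewrite exprD pow_q21 expr1. Qed.
Lemma pow_q b : b ^+ q = fr b. Proof. by []. Qed.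

Lemma Tv_theta x y : (x != 0) || (y != 0) ->
  Tv x y = (if x == 0 then nrm y else nrm x) *: theta_vec q (pg1 x y).
Proof.
rewrite /pg1; case: eqP => [->|/eqP x0] /= h.
  apply/rowP => i; rewrite !mxE.
  case: i => [[|[|[|[|[|[|[|[|//]]]]]]]] ?];
    rewrite /sel /= ?pow_q2 ?pow_q ?fr0 /nrm; ring.
have f1 := x0; rewrite -fr_eq0 in f1; have f2 := x0; rewrite -frfr_eq0 in f2.
apply/rowP => i; rewrite !mxE.
case: i => [[|[|[|[|[|[|[|[|//]]]]]]]] ?];
  rewrite /sel /= ?pow_q211 ?pow_q21 ?pow_q2 ?pow_q ?fr1 /nrm ?frM ?frV ?fr3;
  by field; rewrite ?x0 ?f1 ?f2.
Qed.

Definition cx (p : option F) : F := if p is Some _ then 1 else 0.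
Definition cy (p : option F) : F := if p is Some t then t else 1.

Lemma cxy_nz p : (cx p != 0) || (cy p != 0).
Proof. by case: p => [t|] /=; rewrite oner_eq0 ?orbT. Qed.

Lemma theta_Tv p : theta_vec q p = Tv (cx p) (cy p).
Proof.
rewrite Tv_theta ?cxy_nz //; case: p => [t|] /=;
  rewrite /pg1 /nrm ?oner_eq0 ?eqxx /= !fr1 !mulr1 scale1r ?divr1 //.
Qed.

Lemma mx2E (M N : 'M[F]_2) i j : (M *m N) i j = M i 0 * N 0 j + M i 1 * N 1 j.
Proof. rewrite mxE !big_ord_recl big_ord0 addr0.
have -> : lift ord0 (ord0 : 'I_1) = 1 by apply/val_inj.
by []. Qed.

Lemma mx_inj2 (M : 'M[F]_2) x y : \det M != 0 ->
  M 0 0 * x + M 0 1 * y = 0 -> M 1 0 * x + M 1 1 * y = 0 -> x = 0 /\ y = 0.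
Proof.
move=> hd e1 e2.
have hu : M \in unitmx by rewrite unitmxE unitfE.
have hNM := mulVmx hu.
have h00 : invmx M 0 0 * M 0 0 + invmx M 0 1 * M 1 0 = 1 by rewrite -mx2E hNM mxE.
have h01 : invmx M 0 0 * M 0 1 + invmx M 0 1 * M 1 1 = 0 by rewrite -mx2E hNM mxE.
have h10 : invmx M 1 0 * M 0 0 + invmx M 1 1 * M 1 0 = 0 by rewrite -mx2E hNM mxE.
have h11 : invmx M 1 0 * M 0 1 + invmx M 1 1 * M 1 1 = 1 by rewrite -mx2E hNM mxE.
split.
  have <- : invmx M 0 0 * (M 0 0 * x + M 0 1 * y) + invmx M 0 1 * (M 1 0 * x + M 1 1 * y) = x.
    transitivity ((invmx M 0 0 * M 0 0 + invmx M 0 1 * M 1 0) * x +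
                  (invmx M 0 0 * M 0 1 + invmx M 0 1 * M 1 1) * y); first by ring.
    by rewrite h00 h01 mul0r addr0 mul1r.
  by rewrite e1 e2 !mulr0 addr0.
have <- : invmx M 1 0 * (M 0 0 * x + M 0 1 * y) + invmx M 1 1 * (M 1 0 * x + M 1 1 * y) = y.
  transitivity ((invmx M 1 0 * M 0 0 + invmx M 1 1 * M 1 0) * x +
                (invmx M 1 0 * M 0 1 + invmx M 1 1 * M 1 1) * y); first by ring.
  by rewrite h10 h11 mul0r add0r mul1r.
by rewrite e1 e2 !mulr0 addr0.
Qed.

Lemma pg1Z (c x y : F) : c != 0 -> pg1 (c * x) (c * y) = pg1 x y.
Proof.
move=> c0; rewrite /pg1 mulf_eq0 (negbTE c0) /=; case: eqP => // /eqP x0.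
by congr Some; field; rewrite c0 x0.
Qed.

Definition pact (M : 'M[F]_2) x y := pg1 (M 0 0 * x + M 0 1 * y) (M 1 0 * x + M 1 1 * y).

Lemma pgl_col (M : 'M[F]_2) (p : option F) : pgl_act M p = pact M (cx p) (cy p).
Proof. by case: p => [t|] /=; rewrite /pact ?mulr1 ?mulr0 ?add0r ?mul1r. Qed.

Lemma pgl_pg1 M x y : (x != 0) || (y != 0) -> pgl_act M (pg1 x y) = pact M x y.
Proof.
rewrite /pg1 /pact; case: eqP => [->|/eqP x0] /= h.
  by rewrite -(pg1Z _ _ h) !mulr0 !add0r [y * _]mulrC [y * (M 1 1)]mulrC.
rewrite -(pg1Z _ _ x0); congr pg1; field; exact: x0.
Qed.

Lemma pgl_actM (M N : 'M[F]_2) (p : option F) : \det N != 0 ->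
  pgl_act M (pgl_act N p) = pgl_act (M *m N) p.
Proof.
move=> hN; rewrite [pgl_act N p]pgl_col [pgl_act (M *m N) p]pgl_col {1}/pact pgl_pg1.
  by rewrite /pact !mx2E; congr pg1; ring.
rewrite -negb_and; apply/negP => /andP [/eqP e1 /eqP e2].
have [h1 h2] := mx_inj2 hN e1 e2.
by move: (cxy_nz p); rewrite h1 h2 eqxx.
Qed.

Lemma pgl_act1 (p : option F) : pgl_act 1%:M p = p.
Proof.
case: p => [t|] /=; rewrite /pg1 !mxE /= ?mul0r ?mul1r ?addr0 ?add0r ?oner_eq0 ?eqxx //.
by rewrite divr1.
Qed.

Lemma Phi_theta (M : 'M[F]_2) (p : option F) : \det M != 0 -> exists c, Fq c /\ c != 0 /\
  theta_vec q p *m Kmx M = c *: theta_vec q (pgl_act M p).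
Proof.
move=> hM; rewrite theta_Tv TvK pgl_col /pact.
set a := _ + _; set b := _ + _.
have hab : (a != 0) || (b != 0).
  rewrite -negb_and; apply/negP => /andP [/eqP e1 /eqP e2].
  have [h1 h2] := mx_inj2 hM e1 e2.
  by move: (cxy_nz p); rewrite h1 h2 eqxx.
rewrite Tv_theta //; exists (if a == 0 then nrm b else nrm a); split; last split => //.
  by case: ifP => _; apply: Fq_nrm.
case: ifP => [/eqP a0|/negbT a0]; rewrite nrm_eq0 //.
by move: hab; rewrite a0 eqxx.
Qed.

Lemma Fq_fr x : Fq x -> fr x = x.
Proof. by move/FqP. Qed.

Lemma core_alg (s t l2 l3 l4 : F) : Fq l2 -> Fq l3 -> Fq l4 ->
  s != 0 -> s != 1 -> t != 0 -> t != 1 -> s != t ->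
  l2 + l3 * s + l4 * t = 0 ->
  l2 + l3 * (fr s * fr (fr s)) + l4 * (fr t * fr (fr t)) = 0 ->
  (l3 = 0 /\ l4 = 0) \/ (Fq s /\ Fq t).
Proof.
move=> F2 F3 F4 s0 s1 t0 t1 st E4 E3.
have sq_contra : forall r c2 c3, Fq c2 -> Fq c3 -> c3 != 0 -> r != 0 -> r != 1 ->
    c2 + c3 * r = 0 -> c2 + c3 * (fr r * fr (fr r)) = 0 -> False.
  move=> r c2 c3 G2 G3 c30 r0 r1 e1 e2.
  have Fr : Fq r.
    have -> : r = - c2 / c3.
      apply: (mulfI c30); rewrite [c3 * (_ / _)]mulrC divfK //.
      by apply/eqP; rewrite -addr_eq0 addrC e1.
    by apply: Fqf => //; apply: FqN.
  rewrite !Fq_fr // in e2.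
  have : c3 * (r * (r - 1)) = 0.
    transitivity ((c2 + c3 * (r * r)) - (c2 + c3 * r)); first by ring.
    by rewrite e1 e2 subrr.
  by apply/eqP; rewrite !mulf_eq0 (negbTE c30) (negbTE r0) subr_eq0 (negbTE r1).
have [l40|l4n0] := eqVneq l4 0.
  have [l30|l3n0] := eqVneq l3 0; first by left.
  exfalso; apply: (sq_contra s l2 l3) => //.
    by rewrite -E4 l40 mul0r addr0.
  by rewrite -E3 l40 mul0r addr0.
have [l30|l3n0] := eqVneq l3 0.
  exfalso; apply: (sq_contra t l2 l4) => //.
    by rewrite -E4 l30 mul0r addr0.
  by rewrite -E3 l30 mul0r addr0.
right.
pose la := - l2 / l4; pose mu := - l3 / l4.
have Fla : Fq la by apply: Fqf => //; apply: FqN.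
have Fmu : Fq mu by apply: Fqf => //; apply: FqN.
have mu0 : mu != 0 by rewrite /mu mulf_eq0 oppr_eq0 invr_eq0 (negbTE l3n0) (negbTE l4n0).
have ht : t = la + mu * s.
  have e : l4 * t = - l2 - l3 * s.
    by apply/eqP; rewrite -subr_eq0; apply/eqP; rewrite -E4; ring.
  by apply: (mulfI l4n0); rewrite e /la /mu; field; exact: l4n0.
have G0 : l2 = - la * l4 /\ l3 = - mu * l4.
  by rewrite /la /mu; split; field; exact: l4n0.
clearbody la mu.
have frt : fr t = la + mu * fr s by rewrite ht frD frM (Fq_fr Fla) (Fq_fr Fmu).
have frrt : fr (fr t) = la + mu * fr (fr s) by rewrite frt frD frM (Fq_fr Fla) (Fq_fr Fmu).
have G1 : (la + mu * fr s) * (la + mu * fr (fr s)) - (la + mu * (fr s * fr (fr s))) = 0.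
  rewrite -frt -frrt; apply: (mulfI l4n0); rewrite mulr0 -E3 (proj1 G0) (proj2 G0); ring.
suff Fs : Fq s.
  by split => //; rewrite ht; apply: FqD => //; apply: FqM.
apply/FqP; case: (eqVneq (fr s) s) => // ns; exfalso.
set x := s in G1 ns *; set y := fr s in G1 ns *; set z := fr (fr s) in G1 ns *.
have fy : fr y = z by [].
have fz : fr z = x by rewrite /z /x fr3.
have G2 := congr1 fr G1; rewrite !frB !frM !frD !frM (Fq_fr Fla) (Fq_fr Fmu) ?fy ?fz fr0 in G2.
have G3 := congr1 fr G2; rewrite !frB !frM !frD !frM (Fq_fr Fla) (Fq_fr Fmu) ?fy ?fz fr0 in G3.
have yx : y - x != 0 by rewrite subr_eq0 ns.
have zy : z - y != 0.
  by rewrite subr_eq0; apply/eqP => e; move/eqP: ns; apply; apply: fr_inj.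
have zx : z - x != 0.
  rewrite subr_eq0; apply/eqP => e; move/eqP: ns; apply.
  by move: (congr1 fr e); rewrite fz => ->.
have H1 : (y - x) * (mu * (la + mu * z - z)) = 0.
  transitivity (((la + mu * y) * (la + mu * z) - (la + mu * (y * z))) -
     ((la + mu * z) * (la + mu * x) - (la + mu * (z * x)))); first by ring.
  by rewrite G1 G2 subrr.
have H2 : (z - x) * (mu * (la + mu * y - y)) = 0.
  transitivity (((la + mu * y) * (la + mu * z) - (la + mu * (y * z))) -
     ((la + mu * x) * (la + mu * y) - (la + mu * (x * y)))); first by ring.
  by rewrite G1 G3 subrr.
move/eqP: H1; rewrite !mulf_eq0 (negbTE yx) (negbTE mu0) /= => /eqP H1.
move/eqP: H2; rewrite !mulf_eq0 (negbTE zx) (negbTE mu0) /= => /eqP H2.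
have : (1 - mu) * (z - y) = 0.
  transitivity ((la + mu * y - y) - (la + mu * z - z)); first by ring.
  by rewrite H1 H2 subrr.
move/eqP; rewrite mulf_eq0 (negbTE zy) orbF subr_eq0 => /eqP mu1.
have la0 : la = 0 by move: H1; rewrite -mu1 mul1r; rewrite addrK.
by move/eqP: st; apply; rewrite ht la0 -mu1 add0r mul1r.
Qed.

Lemma sum5 (V : zmodType) (f : 'I_5 -> V) :
  \sum_(i < 5) f i = f (inord 0) + f (inord 1) + f (inord 2) + f (inord 3) + f (inord 4).
Proof.
rewrite !big_ord_recl big_ord0 addr0 !addrA.
by repeat congr (_ + _); congr f; apply/val_inj; rewrite /= inordK.
Qed.

Lemma TvE x y (k : nat) : (k < 8)%N -> Tv x y 0 (inord k) =
  sel (odd (k %/ 4)) x y * fr (sel (odd (k %/ 2)) x y) * fr (fr (sel (odd k) x y)).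
Proof. by move=> hk; rewrite mxE inordK. Qed.

Lemma core5 (y : 'I_5 -> option F) (s t : F) (l : 'I_5 -> F) :
  (forall i, Fq (l i)) ->
  y (inord 0) = None -> y (inord 1) = Some 0 -> y (inord 2) = Some 1 ->
  y (inord 3) = Some s -> y (inord 4) = Some t ->
  s != 0 -> s != 1 -> t != 0 -> t != 1 -> s != t ->
  \sum_(i < 5) l i *: theta_vec q (y i) = 0 ->
  (forall i, l i = 0) \/ (Fq s /\ Fq t).
Proof.
move=> Fl y0 y1 y2 y3 y4 s0 s1 t0 t1 st R.
rewrite sum5 y0 y1 y2 y3 y4 !theta_Tv /= in R.
have E k : (k < 8)%N -> _ := fun hk => congr1 (fun v : 'rV[F]_8 => v 0 (inord k)) R.
have E0 := E 0%N isT; have E3 := E 3%N isT; have E4 := E 4%N isT; have E7 := E 7%N isT.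
rewrite /= !mxE !inordK //= /sel /= ?fr0 ?fr1 in E0 E3 E4 E7.
have E4' : l (inord 2) + l (inord 3) * s + l (inord 4) * t = 0 by rewrite -E4; ring.
have E3' : l (inord 2) + l (inord 3) * (fr s * fr (fr s)) + l (inord 4) * (fr t * fr (fr t)) = 0
  by rewrite -E3; ring.
case: (core_alg (Fl _) (Fl _) (Fl _) s0 s1 t0 t1 st E4' E3') => [[h3 h4]|]; last by right.
left.
have h2 : l (inord 2) = 0 by rewrite -E4' h3 h4; ring.
have h1 : l (inord 1) = 0 by rewrite -E0 h2 h3 h4; ring.
have h0 : l (inord 0) = 0 by rewrite -E7 h2 h3 h4; ring.
move=> i; have -> : i = inord i by apply/val_inj => /=; rewrite inordK.
by case: i => [[|[|[|[|[|//]]]]] ?] /=; [exact: h0|exact: h1|exact: h2|exact: h3|exact: h4].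
Qed.

Lemma det2 (M : 'M[F]_2) : \det M = M 0 0 * M 1 1 - M 0 1 * M 1 0.
Proof.
rewrite (expand_det_row _ 0) !big_ord_recl big_ord0 addr0 /cofactor !det_mx11 !mxE /=.
have e1 : lift 0 (0 : 'I_1) = 1 :> 'I_2 by apply/val_inj.
have e2 : lift ord0 (ord0 : 'I_1) = 1 :> 'I_2 by apply/val_inj.
have e3 : lift (lift ord0 (ord0 : 'I_1)) (0 : 'I_1) = 0 :> 'I_2 by apply/val_inj.
have e4 : lift ord0 (0 : 'I_1) = 1 :> 'I_2 by apply/val_inj.
have e5 : ord0 = 0 :> 'I_2 by apply/val_inj.
rewrite ?e3 ?e1 ?e2 ?e4 ?e5 /bump /= expr0 expr1 mul1r; ring.
Qed.

Lemma pg1_col (p : option F) : pg1 (cx p) (cy p) = p.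
Proof. by case: p => [t|] /=; rewrite /pg1 ?oner_eq0 ?eqxx //= divr1. Qed.

Lemma cross_nz (p p' : option F) : p != p' -> cx p * cy p' - cy p * cx p' != 0.
Proof.
case: p => [t|]; case: p' => [t'|] //=; rewrite ?mul1r ?mulr1 ?mul0r ?mulr0 ?subr0 ?sub0r.
- by move=> h; rewrite subr_eq0 eq_sym; apply: contra h => /eqP ->.
- by rewrite oner_eq0.
- by rewrite oppr_eq0 oner_eq0.
Qed.

Lemma span_add (u : 'I_4 -> 'rV[F]_8) v w :
  Fq_span q u v -> Fq_span q u w -> Fq_span q u (v + w).
Proof.
move=> [a [Fa ->]] [b [Fb ->]]; exists (fun i => a i + b i); split.
  by move=> i; apply: FqD.
by rewrite -big_split; apply: eq_bigr => i _; rewrite scalerDl.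
Qed.

Lemma span_scale (u : 'I_4 -> 'rV[F]_8) c v :
  Fq c -> Fq_span q u v -> Fq_span q u (c *: v).
Proof.
move=> Fc [a [Fa ->]]; exists (fun i => c * a i); split.
  by move=> i; apply: FqM.
by rewrite scaler_sumr; apply: eq_bigr => i _; rewrite scalerA.
Qed.

Lemma transfer (u : 'I_4 -> 'rV[F]_8) (z : 'I_5 -> option F) (N : 'M[F]_2) :
  (forall i, Fq_span q u (theta_vec q (z i))) -> \det N != 0 ->
  exists l : 'I_5 -> F, (forall i, Fq (l i)) /\ (exists i, l i != 0) /\
    \sum_(i < 5) l i *: theta_vec q (pgl_act N (z i)) = 0.
Proof.
move=> hz hN.
have [l [Fl [[i0 li0] R]]] := dep5 hz.
have [c hc] := fchoice (fun i => Phi_theta (z i) hN).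
exists (fun i => l i * c i); split; first by move=> i; apply: FqM => //; case: (hc i).
split; first by exists i0; rewrite mulf_eq0 negb_or li0; case: (hc i0) => _ [].
transitivity (\sum_(i < 5) (l i *: theta_vec q (z i)) *m Kmx N); last first.
  by rewrite -mulmx_suml R mul0mx.
by apply: eq_bigr => i _; rewrite -scalemxAl (proj2 (proj2 (hc i))) scalerA.
Qed.

Lemma comb_theta (r : option F) (sg : F) :
  (match r with Some t => is_true (Fq t) | None => is_true true end) -> Fq sg -> sg != 0 -> sg != 1 ->
  exists k0 k1 k2 k3, [/\ Fq k0, Fq k1, Fq k2 & Fq k3] /\
    theta_vec q r = k0 *: theta_vec q None + k1 *: theta_vec q (Some 0) +
                    k2 *: theta_vec q (Some 1) + k3 *: theta_vec q (Some sg).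
Proof.
move=> hr Fs s0 s1.
case: r hr => [tau|] Ft; last first.
  exists 1, 0, 0, 0; split; first by split; [exact: Fq1|exact: Fq0|exact: Fq0|exact: Fq0].
  by rewrite scale1r !scale0r !addr0.
have d0 : sg * sg - sg != 0.
  have -> : sg * sg - sg = sg * (sg - 1) by ring.
  by rewrite mulf_eq0 negb_or s0 subr_eq0 s1.
pose ga := (tau * tau - tau) / (sg * sg - sg).
pose be := tau - ga * sg.
pose al := 1 - be - ga.
pose de := tau * tau * tau - be - ga * (sg * sg * sg).
have Fga : Fq ga := Fqf (FqB (FqM Ft Ft) Ft) (FqB (FqM Fs Fs) Fs).
have Fbe : Fq be := FqB Ft (FqM Fga Fs).
have Fal : Fq al := FqB (FqB Fq1 Fbe) Fga.
have Fde : Fq de := FqB (FqB (FqM (FqM Ft Ft) Ft) Fbe) (FqM Fga (FqM (FqM Fs Fs) Fs)).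
exists de, al, be, ga; split; first by [].
rewrite !theta_Tv /=; apply/rowP => k; rewrite !mxE.
have ft := Fq_fr Ft; have fs := Fq_fr Fs.
case: k => [[|[|[|[|[|[|[|[|//]]]]]]]] ?];
  rewrite /sel /= ?fr0 ?fr1 ?ft ?fs /de /al /be /ga; field; exact: d0.
Qed.

Lemma inord_neq (i j : nat) : (i < 5)%N -> (j < 5)%N -> i != j ->
  (inord i : 'I_5) != inord j.
Proof. by move=> hi hj hij; rewrite -(inj_eq val_inj) /= !inordK. Qed.

Lemma main_sec (u : 'I_4 -> 'rV[F]_8) (x : 'I_5 -> option F) (hx : injective x)
  (hin : forall i, Fq_span q u (theta_vec q (x i))) :
  exists M : 'M[F]_2, \det M != 0 /\
    (forall i, in_subline q M (x i)) /\
    (forall p : option F, Fq_span q u (theta_vec q p) <-> in_subline q M p).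
Proof.
pose X k := x (inord k).
have hX : forall i j, (i < 5)%N -> (j < 5)%N -> i != j -> X i != X j.
  by move=> i j hi hj hij; rewrite (inj_eq hx) inord_neq.
pose p0 := cx (X 0%N); pose q0 := cy (X 0%N).
pose p1 := cx (X 1%N); pose q1 := cy (X 1%N).
pose p2 := cx (X 2%N); pose q2 := cy (X 2%N).
have D0 : p1 * q0 - q1 * p0 != 0 by apply: cross_nz; apply: hX.
have Da : p2 * q0 - q2 * p0 != 0 by apply: cross_nz; apply: hX.
have Db : p1 * q2 - q1 * p2 != 0 by apply: cross_nz; apply: hX.
pose a := (p2 * q0 - q2 * p0) / (p1 * q0 - q1 * p0).
pose b := (p1 * q2 - q1 * p2) / (p1 * q0 - q1 * p0).
have a0 : a != 0 by rewrite mulf_eq0 negb_or Da invr_eq0 D0.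
have b0 : b != 0 by rewrite mulf_eq0 negb_or Db invr_eq0 D0.
pose M : 'M[F]_2 := \matrix_(i, j) (if j == 0 then a * (if i == 0 then p1 else q1)
                                   else b * (if i == 0 then p0 else q0)).
have M00 : M 0 0 = a * p1 by rewrite mxE.
have M01 : M 0 1 = b * p0 by rewrite mxE.
have M10 : M 1 0 = a * q1 by rewrite mxE.
have M11 : M 1 1 = b * q0 by rewrite mxE.
clearbody M.
have detM : \det M != 0.
  have -> : \det M = a * b * (p1 * q0 - q1 * p0) by rewrite det2 M00 M01 M10 M11; ring.
  by apply: mulf_neq0 => //; apply: mulf_neq0.
have uM : M \in unitmx by rewrite unitmxE unitfE.
pose N := invmx M.
have detN : \det N != 0 by rewrite det_inv invr_eq0.
have back : forall p, pgl_act M (pgl_act N p) = p.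
  by move=> p; rewrite pgl_actM // mulmxV // pgl_act1.
have fwd : forall p, pgl_act N (pgl_act M p) = p.
  by move=> p; rewrite pgl_actM // mulVmx // pgl_act1.
have eM0 : pgl_act M None = X 0%N.
  rewrite /= M01 M11 pg1Z //; exact: pg1_col.
have eM1 : pgl_act M (Some 0) = X 1%N.
  rewrite /= M00 M01 M10 M11 !mulr0 !addr0 pg1Z //; exact: pg1_col.
have eM2 : pgl_act M (Some 1) = X 2%N.
  rewrite /= M00 M01 M10 M11 !mulr1.
  have -> : a * p1 + b * p0 = p2 by rewrite /a /b; field.
  have -> : a * q1 + b * q0 = q2 by rewrite /a /b; field.
  exact: pg1_col.
have hy0 : pgl_act N (X 0%N) = None by rewrite -eM0 fwd.
have hy1 : pgl_act N (X 1%N) = Some 0 by rewrite -eM1 fwd.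
have hy2 : pgl_act N (X 2%N) = Some 1 by rewrite -eM2 fwd.
have Ninj : forall p p', pgl_act N p = pgl_act N p' -> p = p'.
  by move=> p p' e; rewrite -(back p) -(back p') e.
have [s [hs [s0 s1]]] : exists s, pgl_act N (X 3%N) = Some s /\ s != 0 /\ s != 1.
  case E: (pgl_act N (X 3%N)) => [s|].
    exists s; split => //; split.
      by apply/eqP => e; move/eqP: (hX 3 1 isT isT isT)%N; apply; apply: Ninj; rewrite E hy1 e.
    by apply/eqP => e; move/eqP: (hX 3 2 isT isT isT)%N; apply; apply: Ninj; rewrite E hy2 e.
  by move/eqP: (hX 3 0 isT isT isT)%N; case; apply: Ninj; rewrite E hy0.
have key : forall p, Fq_span q u (theta_vec q p) ->
    (forall k, (k < 4)%N -> p != X k) ->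
    exists t, pgl_act N p = Some t /\ Fq s /\ Fq t.
  move=> p hp hpk.
  have [t [ht [t0 [t1 st]]]] : exists t, pgl_act N p = Some t /\ t != 0 /\ t != 1 /\ s != t.
    case E: (pgl_act N p) => [t|]; last first.
      by move/eqP: (hpk 0%N isT); case; apply: Ninj; rewrite E hy0.
    exists t; split => //; split; [|split].
    - by apply/eqP => e; move/eqP: (hpk 1%N isT); apply; apply: Ninj; rewrite E hy1 e.
    - by apply/eqP => e; move/eqP: (hpk 2%N isT); apply; apply: Ninj; rewrite E hy2 e.
    - by apply/eqP => e; move/eqP: (hpk 3%N isT); apply; apply: Ninj; rewrite E hs e.
  pose z : 'I_5 -> option F := fun i => if i == inord 4 then p else x i.
  have hz : forall i, Fq_span q u (theta_vec q (z i)).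
    by move=> i; rewrite /z; case: eqP => _.
  have zk : forall k, (k < 4)%N -> z (inord k) = X k.
    move=> k hk; rewrite /z ifF //; apply/negbTE/inord_neq => //.
      by rewrite (ltn_trans hk).
    by rewrite neq_ltn hk.
  have z4 : z (inord 4) = p by rewrite /z eqxx.
  clearbody z.
  have [l [Fl [[i0 li0] R]]] := transfer hz detN.
  have := core5 (y := fun i => pgl_act N (z i)) Fl _ _ _ _ _ s0 s1 t0 t1 st R.
  rewrite /= z4 !zk // => /(_ hy0 hy1 hy2 hs ht) [h|[Fs Ft]].
    by move: li0; rewrite h eqxx.
  by exists t.
have [t4 [_ [Fs _]]] : exists t, pgl_act N (X 4%N) = Some t /\ Fq s /\ Fq t.
  apply: key; first exact: hin.
  move=> k hk; apply: hX => //; first exact: ltn_trans hk _.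
  by rewrite eq_sym neq_ltn hk.
have eM3 : pgl_act M (Some s) = X 3%N by rewrite -hs back.
have fwdir : forall p, Fq_span q u (theta_vec q p) -> in_subline q M p.
  move=> p hp.
  have [->|n0] := eqVneq p (X 0%N); first by exists None.
  have [->|n1] := eqVneq p (X 1%N); first by exists (Some 0); split => //; exact: Fq0.
  have [->|n2] := eqVneq p (X 2%N); first by exists (Some 1); split => //; exact: Fq1.
  have [->|n3] := eqVneq p (X 3%N); first by exists (Some s).
  have [t [ht [_ Ft]]] : exists t, pgl_act N p = Some t /\ Fq s /\ Fq t.
    by apply: key => // -[|[|[|[|//]]]].
  by exists (Some t); split => //; rewrite -ht back.
have bwdir : forall p, in_subline q M p -> Fq_span q u (theta_vec q p).
  move=> p [r [hr <-]].
  have [k0 [k1 [k2 [k3 [[F0 F1 F2 F3] hr']]]]] := comb_theta hr Fs s0 s1.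
  have [c [Fc [c0 hc]]] := Phi_theta r detM.
  have [d0 [Fd0 [_ hd0]]] := Phi_theta None detM.
  have [d1 [Fd1 [_ hd1]]] := Phi_theta (Some 0) detM.
  have [d2 [Fd2 [_ hd2]]] := Phi_theta (Some 1) detM.
  have [d3 [Fd3 [_ hd3]]] := Phi_theta (Some s) detM.
  rewrite eM0 in hd0; rewrite eM1 in hd1; rewrite eM2 in hd2; rewrite eM3 in hd3.
  have E : c *: theta_vec q (pgl_act M r) =
      (k0 * d0) *: theta_vec q (X 0%N) + (k1 * d1) *: theta_vec q (X 1%N) +
      (k2 * d2) *: theta_vec q (X 2%N) + (k3 * d3) *: theta_vec q (X 3%N).
    by rewrite -hc hr' !mulmxDl -!scalemxAl hd0 hd1 hd2 hd3 !scalerA.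
  have -> : theta_vec q (pgl_act M r) = c^-1 *: (c *: theta_vec q (pgl_act M r)).
    by rewrite scalerA mulVf // scale1r.
  apply: span_scale; first exact: FqV.
  rewrite E; apply: span_add; [apply: span_add; [apply: span_add|]|];
    apply: span_scale; try apply: FqM => //; exact: hin.
exists M; split => //; split; first by move=> i; apply: fwdir.
by move=> p; split; [apply: fwdir|apply: bwdir].
Qed.

End Main.

Unset Implicit Arguments. Set Strict Implicit. Set Printing Implicit Defensive.

Theorem mainTheorem3 (F : finFieldType) (q : nat) (hq : (4 <= q)%N)
  (hF : #|F| = (q ^ 3)%N)
  (u : 'I_4 -> 'rV[F]_8) (hu : is_solid q u)
  (x : 'I_5 -> option F) (hx : injective x)
  (hin : forall i, Fq_span q u (theta_vec q (x i))) :
  exists M : 'M[F]_2, \det M != 0 /\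
    (forall i, in_subline q M (x i)) /\
    (forall p : option F, Fq_span q u (theta_vec q p) <-> in_subline q M p).
Proof.
have hq2 : (2 <= q)%N by apply: leq_trans hq.
exact: (main_sec hq2 hF hx hin).
Qed.
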